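(* Let $\Gamma$ be a finite multiset of formulas and $G$ a formula such that the sequent $G\supset\bot,\Gamma\longrightarrow G$ has an $\mathbf{I}$-proof in which no $\forall$-L and no $\supset$-R rules are used. Then there is an $\mathbf{I}_G$-proof of $\Gamma\longrightarrow G$ in which no $\forall$-L and no $\supset$-R rules are used.
   Context: Formulas are first-order formulas built from atomic formulas and the logical constants $\top$, $\bot$ (not counted as atomic) using $\land,\lor,\supset,\forall,\exists$; $B[t/x]$ is capture-avoiding substitution of term $t$ for free $x$ in $B$. A sequent $\Gamma\longrightarrow\Delta$ is a pair of finite multisets of formulas; $B,\Gamma$ denotes $\Gamma$ with an extra occurrence of $B$. A sequent is an axiom if $\top\in\Delta$ or some formula that is $\bot$ or atomic occurs in both $\Gamma$ and $\Delta$. Writing premises $\Rightarrow$ conclusion, the rules are all instances of: contr-L: $B,B,\Gamma\longrightarrow\Delta\Rightarrow B,\Gamma\longrightarrow\Delta$; contr-R: $\Gamma\longrightarrow\Delta,B,B\Rightarrow\Gamma\longrightarrow\Delta,B$; $\bot$-R: $\Gamma\longrightarrow\Delta,\bot\Rightarrow\Gamma\longrightarrow\Delta,D$; $\land$-L: $B,\Gamma\longrightarrow\Delta\Rightarrow B\land D,\Gamma\longrightarrow\Delta$ and $D,\Gamma\longrightarrow\Delta\Rightarrow B\land D,\Gamma\longrightarrow\Delta$; $\lor$-L: $B,\Gamma\longrightarrow\Delta$ and $D,\Gamma\longrightarrow\Delta\Rightarrow B\lor D,\Gamma\longrightarrow\Delta$; $\land$-R: $\Gamma\longrightarrow\Delta,B$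 and $\Gamma\longrightarrow\Delta,D\Rightarrow\Gamma\longrightarrow\Delta,B\land D$; $\lor$-R: $\Gamma\longrightarrow\Delta,B\Rightarrow\Gamma\longrightarrow\Delta,B\lor D$ and $\Gamma\longrightarrow\Delta,D\Rightarrow\Gamma\longrightarrow\Delta,B\lor D$; $\supset$-L: $\Gamma\longrightarrow\Delta,B$ and $D,\Gamma\longrightarrow\Theta\Rightarrow B\supset D,\Gamma\longrightarrow\Delta,\Theta$; $\supset$-R: $B,\Gamma\longrightarrow\Delta,D\Rightarrow\Gamma\longrightarrow\Delta,B\supset D$; $\forall$-L: $B[t/x],\Gamma\longrightarrow\Delta\Rightarrow\forall x B,\Gamma\longrightarrow\Delta$; $\exists$-R: $\Gamma\longrightarrow\Delta,B[t/x]\Rightarrow\Gamma\longrightarrow\Delta,\exists x B$ ($t$ any term); $\exists$-L: $B[c/x],\Gamma\longrightarrow\Delta\Rightarrow\exists x B,\Gamma\longrightarrow\Delta$; $\forall$-R: $\Gamma\longrightarrow\Delta,B[c/x]\Rightarrow\Gamma\longrightarrow\Delta,\forall x B$, where the constant $c$ does not occur in the conclusion. A $\mathbf{C}$-proof is a finite tree of sequents with axioms at the leaves, each internal node being the conclusion of a rule instance whose premises are its children. An $\mathbf{I}$-proof is a $\mathbf{C}$-proof in which every sequent has exactly one formula in its succedent. For a fixed formula $G$, an $\mathbf{I}_G$-proof is a derivation, all of whose sequents have exactly one succedent formula and whose leaves are axioms, built with the rules available for $\mathbf{I}$-proofs except that: the $\lor$-L rule is removed; the constant $c$ in $\exists$-L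 and $\forall$-R must additionally not occur in $G$; and the following two rules are added ($F$ any formula, $\Delta$ any multiset): $\lor$-L$_G$: $B,\Delta\longrightarrow F$ and $D,\Delta\longrightarrow G\ \Rightarrow\ B\lor D,\Delta\longrightarrow F$; res$_G$: $\Delta\longrightarrow G\ \Rightarrow\ \Delta\longrightarrow F$. A rule ''is used'' if some instance of that schema occurs in the proof. *)

(* Defs.v *)
From Stdlib Require Import List Permutation Arith.
Import ListNotations.

(* First-order terms.  Variables are de Bruijn indices (so substitution is
   automatically capture-avoiding); constants (used as eigenvariables) and
   function symbols are named by nat. *)
Inductive term : Type :=
| TVar : nat -> term
| TConst : nat -> term
| TFun : nat -> list term -> term.

(* Formulas: atoms, the logical constants top / bot (not atomic),
   and the connectives and quantifiers.  [All B] / [Ex B] bind index 0 in B. *)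
Inductive formula : Type :=
| Atom : nat -> list term -> formula
| Top : formula
| Bot : formula
| And : formula -> formula -> formula
| Or : formula -> formula -> formula
| Imp : formula -> formula -> formula
| All : formula -> formula
| Ex : formula -> formula.

Fixpoint tlift (d c : nat) (t : term) : term :=
  match t with
  | TVar n => if c <=? n then TVar (n + d) else TVar n
  | TConst k => TConst k
  | TFun f l => TFun f (map (tlift d c) l)
  end.

(* substitute t (a term living at depth 0) for variable k at depth k,
   decrementing the variables above k *)
Fixpoint tsubst (k : nat) (t : term) (s : term) : term :=
  match s with
  | TVar n => if n =? k then tlift k 0 t
              else if k <? n then TVar (n - 1) else TVar n
  | TConst c => TConst c
  | TFun f l => TFun f (map (tsubst k t) l)
  end.

Fixpoint fsubst (k : nat) (t : term) (B : formula) : formula :=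
  match B with
  | Atom p l => Atom p (map (tsubst k t) l)
  | Top => Top
  | Bot => Bot
  | And B1 B2 => And (fsubst k t B1) (fsubst k t B2)
  | Or B1 B2 => Or (fsubst k t B1) (fsubst k t B2)
  | Imp B1 B2 => Imp (fsubst k t B1) (fsubst k t B2)
  | All B1 => All (fsubst (S k) t B1)
  | Ex B1 => Ex (fsubst (S k) t B1)
  end.

Definition inst (B : formula) (t : term) : formula := fsubst 0 t B.

Fixpoint occurs_t (c : nat) (t : term) : Prop :=
  match t with
  | TVar _ => False
  | TConst k => k = c
  | TFun _ l => fold_right (fun s P => occurs_t c s \/ P) False l
  end.

Fixpoint occurs (c : nat) (B : formula) : Prop :=
  match B with
  | Atom _ l => exists t, In t l /\ occurs_t c t
  | Top | Bot => False
  | And B1 B2 | Or B1 B2 | Imp B1 B2 => occurs c B1 \/ occurs c B2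
  | All B1 | Ex B1 => occurs c B1
  end.

Definition occurs_list (c : nat) (L : list formula) : Prop :=
  exists B, In B L /\ occurs c B.

Definition atomic (B : formula) : Prop :=
  match B with Atom _ _ => True | _ => False end.

Definition axiom (Gam Del : list formula) : Prop :=
  In Top Del \/ exists B, (B = Bot \/ atomic B) /\ In B Gam /\ In B Del.

Inductive rule : Type :=
| RcontrL | RcontrR | RbotR | RandL | RorL | RandR | RorR
| RimpL | RimpR | RallL | RexR | RexL | RallR
| RorLG | RresG.

(* Sequents are pairs of multisets, represented by lists taken up to
   permutation (every rule's conclusion is any permutation of the displayed
   form). *)
Inductive Cder (P : list formula -> list formula -> Prop) (A : rule -> Prop)
  : list formula -> list formula -> Prop :=
| C_ax Gam Del : P Gam Del -> axiom Gam Del -> Cder P A Gam Del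
| C_contrL Gc Del B Gam : P Gc Del -> A RcontrL -> Permutation Gc (B :: Gam) ->
    Cder P A (B :: B :: Gam) Del -> Cder P A Gc Del
| C_contrR Gam Dc B Del : P Gam Dc -> A RcontrR -> Permutation Dc (B :: Del) ->
    Cder P A Gam (B :: B :: Del) -> Cder P A Gam Dc
| C_botR Gam Dc D Del : P Gam Dc -> A RbotR -> Permutation Dc (D :: Del) ->
    Cder P A Gam (Bot :: Del) -> Cder P A Gam Dc
| C_andL1 Gc Del B D Gam : P Gc Del -> A RandL -> Permutation Gc (And B D :: Gam) ->
    Cder P A (B :: Gam) Del -> Cder P A Gc Del
| C_andL2 Gc Del B D Gam : P Gc Del -> A RandL -> Permutation Gc (And B D :: Gam) ->
    Cder P A (D :: Gam) Del -> Cder P A Gc Del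
| C_orL Gc Del B D Gam : P Gc Del -> A RorL -> Permutation Gc (Or B D :: Gam) ->
    Cder P A (B :: Gam) Del -> Cder P A (D :: Gam) Del -> Cder P A Gc Del
| C_andR Gam Dc B D Del : P Gam Dc -> A RandR -> Permutation Dc (And B D :: Del) ->
    Cder P A Gam (B :: Del) -> Cder P A Gam (D :: Del) -> Cder P A Gam Dc
| C_orR1 Gam Dc B D Del : P Gam Dc -> A RorR -> Permutation Dc (Or B D :: Del) ->
    Cder P A Gam (B :: Del) -> Cder P A Gam Dc
| C_orR2 Gam Dc B D Del : P Gam Dc -> A RorR -> Permutation Dc (Or B D :: Del) ->
    Cder P A Gam (D :: Del) -> Cder P A Gam Dc
| C_impL Gc Dc B D Gam Del The : P Gc Dc -> A RimpL ->
    Permutation Gc (Imp B D :: Gam) -> Permutation Dc (Del ++ The) ->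
    Cder P A Gam (B :: Del) -> Cder P A (D :: Gam) The -> Cder P A Gc Dc
| C_impR Gam Dc B D Del : P Gam Dc -> A RimpR -> Permutation Dc (Imp B D :: Del) ->
    Cder P A (B :: Gam) (D :: Del) -> Cder P A Gam Dc
| C_allL Gc Del B t Gam : P Gc Del -> A RallL -> Permutation Gc (All B :: Gam) ->
    Cder P A (inst B t :: Gam) Del -> Cder P A Gc Del
| C_exR Gam Dc B t Del : P Gam Dc -> A RexR -> Permutation Dc (Ex B :: Del) ->
    Cder P A Gam (inst B t :: Del) -> Cder P A Gam Dc
| C_exL Gc Del B c Gam : P Gc Del -> A RexL -> Permutation Gc (Ex B :: Gam) ->
    ~ occurs_list c Gc -> ~ occurs_list c Del ->
    Cder P A (inst B (TConst c) :: Gam) Del -> Cder P A Gc Del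
| C_allR Gam Dc B c Del : P Gam Dc -> A RallR -> Permutation Dc (All B :: Del) ->
    ~ occurs_list c Gam -> ~ occurs_list c Dc ->
    Cder P A Gam (inst B (TConst c) :: Del) -> Cder P A Gam Dc.

Definition single_succ (Gam Del : list formula) : Prop := length Del = 1.

Definition Iproof (A : rule -> Prop) (Gam : list formula) (F : formula) : Prop :=
  Cder single_succ A Gam [F].

(* I_G-proofs (single-succedent, written Gam --> F): the I-rules without or-L,
   with the extra freshness condition w.r.t. G, plus or-L_G and res_G.
   (contr-R has no single-succedent instance, so it is absent.) *)
Inductive IGder (G : formula) (A : rule -> Prop) : list formula -> formula -> Prop :=
| G_ax Gam F : axiom Gam [F] -> IGder G A Gam F
| G_contrL Gc F B Gam : A RcontrL -> Permutation Gc (B :: Gam) ->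
    IGder G A (B :: B :: Gam) F -> IGder G A Gc F
| G_botR Gam F : A RbotR -> IGder G A Gam Bot -> IGder G A Gam F
| G_andL1 Gc F B D Gam : A RandL -> Permutation Gc (And B D :: Gam) ->
    IGder G A (B :: Gam) F -> IGder G A Gc F
| G_andL2 Gc F B D Gam : A RandL -> Permutation Gc (And B D :: Gam) ->
    IGder G A (D :: Gam) F -> IGder G A Gc F
| G_andR Gam B D : A RandR -> IGder G A Gam B -> IGder G A Gam D ->
    IGder G A Gam (And B D)
| G_orR1 Gam B D : A RorR -> IGder G A Gam B -> IGder G A Gam (Or B D)
| G_orR2 Gam B D : A RorR -> IGder G A Gam D -> IGder G A Gam (Or B D)
| G_impL Gc F B D Gam : A RimpL -> Permutation Gc (Imp B D :: Gam) ->
    IGder G A Gam B -> IGder G A (D :: Gam) F -> IGder G A Gc F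
| G_impR Gam B D : A RimpR -> IGder G A (B :: Gam) D -> IGder G A Gam (Imp B D)
| G_allL Gc F B t Gam : A RallL -> Permutation Gc (All B :: Gam) ->
    IGder G A (inst B t :: Gam) F -> IGder G A Gc F
| G_exR Gam B t : A RexR -> IGder G A Gam (inst B t) -> IGder G A Gam (Ex B)
| G_exL Gc F B c Gam : A RexL -> Permutation Gc (Ex B :: Gam) ->
    ~ occurs_list c Gc -> ~ occurs c F -> ~ occurs c G ->
    IGder G A (inst B (TConst c) :: Gam) F -> IGder G A Gc F
| G_allR Gam B c : A RallR ->
    ~ occurs_list c Gam -> ~ occurs c (All B) -> ~ occurs c G ->
    IGder G A Gam (inst B (TConst c)) -> IGder G A Gam (All B)
| G_orLG Gc F B D Del : A RorLG -> Permutation Gc (Or B D :: Del) ->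
    IGder G A (B :: Del) F -> IGder G A (D :: Del) G -> IGder G A Gc F
| G_resG Del F : A RresG -> IGder G A Del G -> IGder G A Del F.

Definition no_allL_impR (r : rule) : Prop := r <> RallL /\ r <> RimpR.

(* Main.v *)
Require Import Defs.
From Stdlib Require Import List Permutation Arith Lia.
Import ListNotations.

Definition term_ind' (P : term -> Prop) (Hv : forall n, P (TVar n)) (Hc : forall k, P (TConst k))
  (Hf : forall f l, Forall P l -> P (TFun f l)) : forall t, P t :=
  fix F t := match t with
  | TVar n => Hv n | TConst k => Hc k
  | TFun f l => Hf f l ((fix go l := match l return Forall P l with
        [] => Forall_nil _ | x :: r => Forall_cons _ (F x) (go r) end) l)
  end.

Fixpoint rnt (s : nat -> nat) (t : term) : term :=
  match t with TVar n => TVar n | TConst k => TConst (s k) | TFun f l => TFun f (map (rnt s) l) end.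
Fixpoint rn s B := match B with
 | Atom p l => Atom p (map (rnt s) l) | Top => Top | Bot => Bot
 | And a b => And (rn s a) (rn s b) | Or a b => Or (rn s a) (rn s b)
 | Imp a b => Imp (rn s a) (rn s b)
 | All a => All (rn s a) | Ex a => Ex (rn s a) end.

Lemma rnt_tlift s d c t : rnt s (tlift d c t) = tlift d c (rnt s t).
Proof. induction t using term_ind'; simpl; auto.
 - destruct (c <=? n); reflexivity.
 - f_equal. rewrite !map_map. apply map_ext_in. intros a Ha. rewrite Forall_forall in H. apply H; auto.
Qed.

Lemma rnt_tsubst s k t u : rnt s (tsubst k t u) = tsubst k (rnt s t) (rnt s u).
Proof. induction u using term_ind'; simpl.
 - destruct (n =? k). apply rnt_tlift. destruct (k <? n); reflexivity.
 - reflexivity.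
 - f_equal. rewrite !map_map. apply map_ext_in. intros a Ha. rewrite Forall_forall in H. apply H; auto.
Qed.

Lemma rn_fsubst s B : forall k t, rn s (fsubst k t B) = fsubst k (rnt s t) (rn s B).
Proof. induction B; intros; simpl; f_equal; auto.
  rewrite !map_map. apply map_ext. intros; apply rnt_tsubst. Qed.

Lemma rn_inst_t s B t : rn s (inst B t) = inst (rn s B) (rnt s t).
Proof. unfold inst. apply rn_fsubst. Qed.

Lemma rn_inst s B c : rn s (inst B (TConst c)) = inst (rn s B) (TConst (s c)).
Proof. apply rn_inst_t. Qed.

Lemma occ_list c l : fold_right (fun s P => occurs_t c s \/ P) False l <-> exists u, In u l /\ occurs_t c u.
Proof. induction l; simpl. split; [tauto| intros [u [[] _]]]. rewrite IHl. split.
 intros [H|[u [H1 H2]]]; eauto. intros [u [[<-|H1] H2]]; eauto. Qed.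

Lemma rnt_agree s s' t : (forall x, occurs_t x t -> s x = s' x) -> rnt s t = rnt s' t.
Proof. induction t using term_ind'; simpl; intros Hx; auto.
 - f_equal. apply map_ext_in. intros a Ha. rewrite Forall_forall in H. apply H; auto.
   intros x Hxa. apply Hx. apply occ_list. eauto.
Qed.

Lemma rn_agree s s' B : (forall x, occurs x B -> s x = s' x) -> rn s B = rn s' B.
Proof. induction B; simpl; intros Hx; f_equal;
  try (apply IHB1; intros; apply Hx; tauto); try (apply IHB2; intros; apply Hx; tauto);
  try (apply IHB; intros; apply Hx; tauto).
 all: try (apply map_ext_in; intros a Ha; apply rnt_agree; intros x Hxa; apply Hx; eauto).
 all: reflexivity.
Qed.

Lemma rnt_id t : rnt (fun x => x) t = t.
Proof. induction t using term_ind'; simpl; auto. f_equal. rewrite <- (map_id l) at 2.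
  apply map_ext_in. intros a Ha. rewrite Forall_forall in H. apply H; auto. Qed.

Lemma rn_id B : rn (fun x => x) B = B.
Proof. induction B; simpl; f_equal; auto. rewrite <- (map_id l) at 2.
  apply map_ext. apply rnt_id. Qed.

Lemma occ_tlift y d c t : occurs_t y (tlift d c t) -> occurs_t y t.
Proof. induction t using term_ind'; simpl. destruct (c <=? n); simpl; tauto. auto.
 rewrite !occ_list. intros [u [Hu Ho]]. apply in_map_iff in Hu as [v [<- Hv]].
 rewrite Forall_forall in H. exists v; split; auto. Qed.

Lemma occ_tsubst y k t u : occurs_t y (tsubst k t u) -> occurs_t y u \/ occurs_t y t.
Proof. induction u using term_ind'; simpl.
 - destruct (n =? k). intros H; right; eapply occ_tlift; eauto. destruct (k <? n); simpl; tauto.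
 - auto.
 - rewrite !occ_list. intros [u [Hu Ho]]. apply in_map_iff in Hu as [v [<- Hv]].
   rewrite Forall_forall in H. destruct (H v Hv Ho); eauto.
Qed.

Lemma occ_fsubst y B : forall k t, occurs y (fsubst k t B) -> occurs y B \/ occurs_t y t.
Proof. induction B; simpl; intros k t H; auto.
 - destruct H as [u [Hu Ho]]. apply in_map_iff in Hu as [v [<- Hv]].
   destruct (occ_tsubst _ _ _ _ Ho); eauto.
 - destruct H as [H|H]; [apply IHB1 in H|apply IHB2 in H]; tauto.
 - destruct H as [H|H]; [apply IHB1 in H|apply IHB2 in H]; tauto.
 - destruct H as [H|H]; [apply IHB1 in H|apply IHB2 in H]; tauto.
 - eapply IHB; eauto.
 - eapply IHB; eauto.
Qed.

Fixpoint mt (t : term) : nat := match t with TVar _ => 0 | TConst k => S k | TFun _ l => list_sum (map mt l) end.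
Fixpoint mf B := match B with Atom _ l => list_sum (map mt l) | Top | Bot => 0
  | And a b | Or a b | Imp a b => mf a + mf b | All a | Ex a => mf a end.

Lemma in_sum x l : In x l -> x <= list_sum l.
Proof. induction l; simpl; [tauto|]. intros [->|H]; [lia| specialize (IHl H); lia]. Qed.

Lemma mt_occ c t : occurs_t c t -> c < mt t.
Proof. induction t using term_ind'; simpl; intros Ho. contradiction. lia.
 apply occ_list in Ho as [u [Hu Ho]]. rewrite Forall_forall in H.
 specialize (H u Hu Ho). pose proof (in_sum (mt u) (map mt l) (in_map _ _ _ Hu)). lia. Qed.

Lemma mf_occ c B : occurs c B -> c < mf B.
Proof. induction B; simpl; intros Ho; try contradiction; try (destruct Ho as [Ho|Ho]; [apply IHB1 in Ho|apply IHB2 in Ho]; lia); auto.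
 destruct Ho as [u [Hu Ho]]. apply mt_occ in Ho.
 pose proof (in_sum (mt u) (map mt l) (in_map _ _ _ Hu)). lia. Qed.

Lemma fresh (L : list formula) (X : list nat) : exists c, (forall B, In B L -> ~ occurs c B) /\ ~ In c X.
Proof. exists (S (list_sum (map mf L) + list_sum X)). split.
 - intros B HB Ho. apply mf_occ in Ho. pose proof (in_sum _ _ (in_map mf _ _ HB)). lia.
 - intros H; apply in_sum in H; lia. Qed.

Definition upd (s : nat -> nat) c c' := fun x => if Nat.eq_dec x c then c' else s x.
Lemma upd_agree s c c' B : ~ occurs c B -> rn (upd s c c') B = rn s B.
Proof. intros H. apply rn_agree; intros x Hx; unfold upd; destruct (Nat.eq_dec x c); [subst; contradiction| reflexivity]. Qed.
Lemma upd_c s c c' : upd s c c' c = c'.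
Proof. unfold upd. destruct (Nat.eq_dec c c); congruence. Qed.

Lemma pin_hd {T} (Gc Gam : list T) B : Permutation Gc (B::Gam) -> In B Gc.
Proof. intros H. apply (Permutation_in _ (Permutation_sym H)). left; auto. Qed.
Lemma pin_tl {T} (Gc Gam : list T) B x : Permutation Gc (B::Gam) -> In x Gam -> In x Gc.
Proof. intros H Hx. apply (Permutation_in _ (Permutation_sym H)). right; auto. Qed.
Lemma pin_incl {T} (Gc Gam : list T) B : Permutation Gc (B::Gam) -> incl Gam Gc.
Proof. intros H x; apply pin_tl with B; auto. Qed.

Lemma notc c Gc x : ~ occurs_list c Gc -> In x Gc -> ~ occurs c x.
Proof. intros H Hx Ho; apply H; exists x; auto. Qed.

Lemma dupP G A D P F : A RcontrL -> In P D ->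
  (forall L, incl D (P :: L) -> incl (P :: L) D -> IGder G A (P :: P :: L) F) -> IGder G A D F.
Proof. intros HA HP H. apply in_split in HP as [l1 [l2 ->]].
  assert (p : Permutation (l1 ++ P :: l2) (P :: l1 ++ l2)) by (apply Permutation_sym, Permutation_middle).
  apply G_contrL with (B := P) (Gam := l1 ++ l2); auto.
  apply H; intros x; apply Permutation_in; auto. apply Permutation_sym; auto. Qed.

Lemma W G A D F : A RcontrL -> IGder G A D F ->
  forall s D', (forall B, In B D -> In (rn s B) D') -> IGder (rn s G) A D' (rn s F).
Proof.
  intros HcA H. induction H as
   [Gam F Hax
   |Gc F B Gam HA Hp Hd IH
   |Gam F HA Hd IH
   |Gc F B D Gam HA Hp Hd IH
   |Gc F B D Gam HA Hp Hd IH
   |Gam B D HA Hd1 IH1 Hd2 IH2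
   |Gam B D HA Hd IH
   |Gam B D HA Hd IH
   |Gc F B D Gam HA Hp Hd1 IH1 Hd2 IH2
   |Gam B D HA Hd IH
   |Gc F B t Gam HA Hp Hd IH
   |Gam B t HA Hd IH
   |Gc F B c Gam HA Hp Hc1 Hc2 Hc3 Hd IH
   |Gam B c HA Hc1 Hc2 Hc3 Hd IH
   |Gc F B D Del HA Hp Hd1 IH1 Hd2 IH2
   |Del F HA Hd IH]; intros s D' Hinc.
  - destruct Hax as [H|[B [HB [H1 H2]]]].
    + destruct H as [H|[]]; subst. apply G_ax; left; simpl; auto.
    + destruct H2 as [H2|[]]; subst. apply G_ax; right; exists (rn s B); split.
      * destruct HB as [->|HB]; [left; reflexivity| right; destruct B; simpl in *; tauto].
      * split; [apply Hinc; auto| simpl; auto].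
  - apply IH. intros x Hx; apply Hinc. destruct Hx as [<-|[<-|Hx]].
    eapply pin_hd; eauto. eapply pin_hd; eauto. eapply pin_tl; eauto.
  - apply G_botR; auto.
  - apply dupP with (P := rn s (And B D)); auto. apply Hinc; eapply pin_hd; eauto.
    intros L H1 H2. apply G_andL1 with (B := rn s B) (D := rn s D) (Gam := rn s (And B D) :: L); auto.
    apply IH. intros x [<-|Hx]; [left; auto | right; apply H1; apply Hinc; eapply pin_tl; eauto].
  - apply dupP with (P := rn s (And B D)); auto. apply Hinc; eapply pin_hd; eauto.
    intros L H1 H2. apply G_andL2 with (B := rn s B) (D := rn s D) (Gam := rn s (And B D) :: L); auto.
    apply IH. intros x [<-|Hx]; [left; auto | right; apply H1; apply Hinc; eapply pin_tl; eauto].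
  - simpl; apply G_andR; auto.
  - simpl; apply G_orR1; auto.
  - simpl; apply G_orR2; auto.
  - apply dupP with (P := rn s (Imp B D)); auto. apply Hinc; eapply pin_hd; eauto.
    intros L H1 H2. apply G_impL with (B := rn s B) (D := rn s D) (Gam := rn s (Imp B D) :: L); auto.
    + apply IH1. intros x Hx. apply H1; apply Hinc; eapply pin_tl; eauto.
    + apply IH2. intros x [<-|Hx]; [left; auto | right; apply H1; apply Hinc; eapply pin_tl; eauto].
  - simpl; apply G_impR; auto. apply IH. intros x [<-|Hx]; [left|right; apply Hinc]; auto.
  - apply dupP with (P := rn s (All B)); auto. apply Hinc; eapply pin_hd; eauto.
    intros L H1 H2. apply G_allL with (B := rn s B) (t := rnt s t) (Gam := rn s (All B) :: L); auto.
    apply IH. intros x [<-|Hx]; [left; symmetry; apply rn_inst_t | right; apply H1; apply Hinc; eapply pin_tl; eauto].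
  - simpl; apply G_exR with (t := rnt s t); auto. rewrite <- rn_inst_t. apply IH; auto.
  - destruct (fresh (rn s F :: rn s G :: D') []) as [c' [Hf _]].
    assert (Hin : In (rn s (Ex B)) D') by (apply Hinc; eapply pin_hd; eauto).
    assert (HcB : ~ occurs c B) by (apply (notc c Gc (Ex B)); auto; eapply pin_hd; eauto).
    apply dupP with (P := rn s (Ex B)); auto. intros L H1 H2.
    apply G_exL with (B := rn s B) (c := c') (Gam := rn s (Ex B) :: L); auto.
    + intros [B0 [HB0 Ho]]. apply (Hf B0); auto. right; right.
      destruct HB0 as [<-|HB0]; auto.
    + apply Hf; simpl; auto.
    + apply Hf; simpl; auto.
    + rewrite <- (upd_agree s c c' G Hc3), <- (upd_agree s c c' F Hc2). apply IH.
      intros x [<-|Hx].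
      * left. rewrite rn_inst, upd_agree, upd_c; auto.
      * right. rewrite upd_agree. apply H1; apply Hinc; eapply pin_tl; eauto.
        apply (notc c Gc); auto. eapply pin_tl; eauto.
  - destruct (fresh (rn s G :: rn s (All B) :: D') []) as [c' [Hf _]].
    simpl. apply G_allR with (c := c'); auto.
    + intros [B0 [HB0 Ho]]. apply (Hf B0); auto. right; right; auto.
    + apply (Hf (rn s (All B))); simpl; auto.
    + apply Hf; simpl; auto.
    + assert (E : rn (upd s c c') (inst B (TConst c)) = inst (rn s B) (TConst c')).
      { rewrite rn_inst, upd_agree, upd_c; auto. }
      rewrite <- E, <- (upd_agree s c c' G Hc3). apply IH.
      intros x Hx. rewrite upd_agree. apply Hinc; auto. apply (notc c Gam); auto.
  - apply dupP with (P := rn s (Or B D)); auto. apply Hinc; eapply pin_hd; eauto.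
    intros L H1 H2. apply G_orLG with (B := rn s B) (D := rn s D) (Del := rn s (Or B D) :: L); auto.
    + apply IH1. intros x [<-|Hx]; [left; auto | right; apply H1; apply Hinc; eapply pin_tl; eauto].
    + apply IH2. intros x [<-|Hx]; [left; auto | right; apply H1; apply Hinc; eapply pin_tl; eauto].
  - apply G_resG; auto.
Qed.

Lemma Wid G A D D' F : A RcontrL -> IGder G A D F -> incl D D' -> IGder G A D' F.
Proof. intros HA H Hi. pose proof (W G A D F HA H (fun x => x) D') as H'.
  rewrite !rn_id in H'. apply H'. intros B HB. rewrite rn_id; auto. Qed.

Definition rel G s (Gc D : list formula) :=
  forall A0, In A0 Gc -> (A0 = Imp G Bot /\ rn s G = G) \/ In (rn s A0) D.
Definition avoid (X : list nat) (D : list formula) := forall c B, In c X -> In B D -> occurs c B -> False.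
Definition Cont G A X D F := forall D3, incl D D3 -> avoid X D3 -> IGder G A D3 F -> IGder G A D3 G.

Lemma Cder_P P A Gm Dl : Cder P A Gm Dl -> P Gm Dl.
Proof. destruct 1; auto. Qed.

Lemma perm1 (a b : formula) l : Permutation [a] (b :: l) -> b = a /\ l = [].
Proof. intros H. pose proof (Permutation_length H) as Hl. destruct l; [|simpl in Hl; discriminate].
  apply Permutation_length_1 in H. auto. Qed.

Lemma rel_tail G s Gc D Gam D3 : rel G s Gc D -> incl Gam Gc -> incl D D3 -> rel G s Gam D3.
Proof. intros H Hi Hi' A0 HA0. destruct (H A0 (Hi _ HA0)); auto. Qed.
Lemma rel_cons G s Gam D3 B : In (rn s B) D3 -> rel G s Gam D3 -> rel G s (B :: Gam) D3.
Proof. intros H1 H2 A0 [<-|HA0]; auto. Qed.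
Lemma avoid_cons X D B : avoid X D -> (forall c, In c X -> occurs c B -> False) -> avoid X (B :: D).
Proof. intros H1 H2 c B0 Hc [<-|HB0] Ho; eauto. Qed.
Lemma avoid_incl X D D3 : avoid X D -> incl D3 D -> avoid X D3.
Proof. intros H Hi c B Hc HB; eauto. Qed.
Lemma avoid_sub X D P B : avoid X D -> In P D -> (forall c, occurs c B -> occurs c P) ->
  forall c, In c X -> occurs c B -> False.
Proof. intros H HP Hs c Hc Ho; eauto. Qed.
Lemma Cont_mono G A X D D' F : Cont G A X D F -> incl D D' -> Cont G A X D' F.
Proof. intros H Hi D3 Hi3; apply H; eapply incl_tran; eauto. Qed.
Lemma rel_nonimp G s Gc D P : rel G s Gc D -> In P Gc -> (forall a b, P <> Imp a b) -> In (rn s P) D.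
Proof. intros H HP Hn. destruct (H P HP) as [[E _]|]; auto. exfalso; eapply Hn; eauto. Qed.

Ltac na := split; discriminate.

Lemma trans G : forall Gc Dc, Cder single_succ no_allL_impR Gc Dc ->
  forall F s X D, Dc = [F] -> rel G s Gc D -> avoid X D ->
  Cont G no_allL_impR X D (rn s F) -> IGder G no_allL_impR D (rn s F).
Proof.
  intros Gc Dc H. induction H as
   [Gam Del HP Hax
   |Gc Del B Gam HP HA Hp Hd IH
   |Gam Dc B Del HP HA Hp Hd IH
   |Gam Dc B Del HP HA Hp Hd IH
   |Gc Del B D Gam HP HA Hp Hd IH
   |Gc Del B D Gam HP HA Hp Hd IH
   |Gc Del B D Gam HP HA Hp Hd1 IH1 Hd2 IH2
   |Gam Dc B D Del HP HA Hp Hd1 IH1 Hd2 IH2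
   |Gam Dc B D Del HP HA Hp Hd IH
   |Gam Dc B D Del HP HA Hp Hd IH
   |Gc Dc B D Gam Del The HP HA Hp1 Hp2 Hd1 IH1 Hd2 IH2
   |Gam Dc B D Del HP HA Hp Hd IH
   |Gc Del B t Gam HP HA Hp Hd IH
   |Gam Dc B t Del HP HA Hp Hd IH
   |Gc Del B c Gam HP HA Hp Hc1 Hc2 Hd IH
   |Gam Dc B c Del HP HA Hp Hc1 Hc2 Hd IH];
  intros F0 s X D0 HD Hrel Hav HC; subst.
  -
    destruct Hax as [H|[B [HB [H1 H2]]]].
    + destruct H as [H|[]]; subst. apply G_ax; left; simpl; auto.
    + destruct H2 as [H2|[]]; subst B. destruct (Hrel F0 H1) as [[-> _]|Hin].
      * destruct HB as [HB|HB]; [discriminate|simpl in HB; contradiction].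
      * apply G_ax; right; exists (rn s F0); split.
        -- destruct HB as [->|HB]; [left; reflexivity| right; destruct F0; simpl in *; tauto].
        -- split; [auto| simpl; auto].
  -
    apply (IH F0 s X _ eq_refl); auto. intros A0 HA0; apply Hrel. destruct HA0 as [<-|[<-|HA0]].
    eapply pin_hd; eauto. eapply pin_hd; eauto. eapply pin_tl; eauto.
  -
    apply Cder_P in Hd. unfold single_succ in Hd. simpl in Hd. discriminate.
  -
    apply perm1 in Hp as [-> ->]. apply G_botR; [na|].
    apply (IH Bot s X D0 eq_refl Hrel Hav).
    intros D3 Hi Ha h. apply HC; auto. apply G_botR; [na|exact h].
  -
    assert (Hin : In (rn s (And B D)) D0) by (eapply rel_nonimp; eauto; [eapply pin_hd; eauto| discriminate]).
    apply dupP with (P := rn s (And B D)); [na|auto|]. intros L H1 H2.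
    apply G_andL1 with (B := rn s B) (D := rn s D) (Gam := rn s (And B D) :: L); [na|apply Permutation_refl|].
    apply (IH F0 s X _ eq_refl); auto.
    + apply rel_cons; [left; auto|]. eapply rel_tail; eauto. eapply pin_incl; eauto. apply incl_tl; auto.
    + apply avoid_cons. eapply avoid_incl; eauto. eapply avoid_sub; eauto. simpl; auto.
    + eapply Cont_mono; eauto. apply incl_tl; auto.
  -
    assert (Hin : In (rn s (And B D)) D0) by (eapply rel_nonimp; eauto; [eapply pin_hd; eauto| discriminate]).
    apply dupP with (P := rn s (And B D)); [na|auto|]. intros L H1 H2.
    apply G_andL2 with (B := rn s B) (D := rn s D) (Gam := rn s (And B D) :: L); [na|apply Permutation_refl|].
    apply (IH F0 s X _ eq_refl); auto.
    + apply rel_cons; [left; auto|]. eapply rel_tail; eauto. eapply pin_incl; eauto. apply incl_tl; auto.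
    + apply avoid_cons. eapply avoid_incl; eauto. eapply avoid_sub; eauto. simpl; auto.
    + eapply Cont_mono; eauto. apply incl_tl; auto.
  -
    assert (Hin : In (rn s (Or B D)) D0) by (eapply rel_nonimp; eauto; [eapply pin_hd; eauto| discriminate]).
    apply dupP with (P := rn s (Or B D)); [na|auto|]. intros L H1 H2.
    apply G_orLG with (B := rn s B) (D := rn s D) (Del := rn s (Or B D) :: L); [na|apply Permutation_refl| |].
    + apply (IH1 F0 s X _ eq_refl); auto.
      * apply rel_cons; [left; auto|]. eapply rel_tail; eauto. eapply pin_incl; eauto. apply incl_tl; auto.
      * apply avoid_cons. eapply avoid_incl; eauto. eapply avoid_sub; eauto. simpl; auto.
      * eapply Cont_mono; eauto. apply incl_tl; auto.
    + assert (Ha : avoid X (rn s D :: rn s (Or B D) :: L)).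
      { apply avoid_cons. eapply avoid_incl; eauto. eapply avoid_sub; eauto. simpl; auto. }
      apply HC; auto. apply incl_tl; auto.
      apply (IH2 F0 s X _ eq_refl); auto.
      * apply rel_cons; [left; auto|]. eapply rel_tail; eauto. eapply pin_incl; eauto. apply incl_tl; auto.
      * eapply Cont_mono; eauto. apply incl_tl; auto.
  -
    apply perm1 in Hp as [<- ->]. simpl in HC |- *.
    assert (HBD : IGder G no_allL_impR D0 (rn s B)).
    { apply (IH1 B s X D0 eq_refl); auto.
      intros D3 Hi Ha HB3. apply HC; auto. apply G_andR; [na|auto|].
      apply (IH2 D s X D3 eq_refl); auto.
      - eapply rel_tail; eauto. apply incl_refl.
      - intros D4 Hi4 Ha4 HD4. apply HC; [eapply incl_tran; eauto|auto|].
        apply G_andR; [na| eapply Wid; eauto; na | auto]. }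
    apply G_andR; [na|auto|].
    apply (IH2 D s X D0 eq_refl); auto.
    intros D4 Hi4 Ha4 HD4. apply HC; auto. apply G_andR; [na| eapply Wid; eauto; na | auto].
  -
    apply perm1 in Hp as [<- ->]. simpl in HC |- *. apply G_orR1; [na|].
    apply (IH B s X D0 eq_refl); auto.
    intros D3 Hi Ha H3; apply HC; auto; apply G_orR1; auto; na.
  -
    apply perm1 in Hp as [<- ->]. simpl in HC |- *. apply G_orR2; [na|].
    apply (IH D s X D0 eq_refl); auto.
    intros D3 Hi Ha H3; apply HC; auto; apply G_orR2; auto; na.
  -
    pose proof (Cder_P _ _ _ _ Hd1) as Hl. unfold single_succ in Hl. destruct Del; [|simpl in Hl; discriminate].
    simpl in Hp2. apply Permutation_length_1_inv in Hp2. subst The.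
    assert (HinG : In (Imp B D) Gc) by (eapply pin_hd; eauto).
    assert (HiG : incl Gam Gc) by (eapply pin_incl; eauto).
    destruct (Hrel _ HinG) as [[E Hfix]|Hin].
    + injection E as -> ->. apply G_resG; [na|].
      assert (H := IH1 G s X D0 eq_refl (rel_tail _ _ _ _ _ _ Hrel HiG (incl_refl _)) Hav).
      rewrite Hfix in H. apply H. intros D3 _ _ h; exact h.
    + assert (Hright : forall D3, incl D0 D3 -> avoid X D3 -> IGder G no_allL_impR (rn s D :: D3) (rn s F0)).
      { intros D3 Hi Ha. apply (IH2 F0 s X); auto.
        - apply rel_cons; [left; auto|]. eapply rel_tail; eauto. apply incl_tl; auto.
        - apply avoid_cons; auto. eapply avoid_sub; eauto. simpl; auto.
        - eapply Cont_mono; eauto. eapply incl_tran; eauto. apply incl_tl, incl_refl. }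
      assert (Hcont : Cont G no_allL_impR X D0 (rn s B)).
      { intros D3 Hi Ha HB3. apply HC; auto.
        apply dupP with (P := rn s (Imp B D)); [na| auto|]. intros L3 H31 H32.
        apply G_impL with (B := rn s B) (D := rn s D) (Gam := rn s (Imp B D) :: L3); [na|apply Permutation_refl| |].
        - eapply Wid; eauto; na.
        - eapply Wid; [na|apply Hright; eauto|]. apply incl_cons; [left; auto|]. apply incl_tl; auto. }
      apply dupP with (P := rn s (Imp B D)); [na| auto|]. intros L H1 H2.
      apply G_impL with (B := rn s B) (D := rn s D) (Gam := rn s (Imp B D) :: L); [na|apply Permutation_refl| |].
      * eapply Wid; [na| |exact H1]. apply (IH1 B s X D0 eq_refl); auto.
        eapply rel_tail; eauto. apply incl_refl.
      * eapply Wid; [na|apply (Hright D0 (incl_refl _) Hav)|]. apply incl_cons; [left; auto|]. apply incl_tl; auto.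
  - destruct HA as [_ HA]; contradiction.
  - destruct HA as [HA _]; contradiction.
  -
    apply perm1 in Hp as [<- ->]. simpl in HC |- *.
    apply G_exR with (t := rnt s t); [na|]. rewrite <- rn_inst_t.
    apply (IH (inst B t) s X D0 eq_refl); auto.
    intros D3 Hi Ha H3; apply HC; auto. apply G_exR with (t := rnt s t); [na|]. rewrite <- rn_inst_t; auto.
  -
    assert (HcF : ~ occurs c F0) by (intros Ho; apply Hc2; exists F0; simpl; auto).
    assert (HinG : In (Ex B) Gc) by (eapply pin_hd; eauto).
    assert (HcB : ~ occurs c B) by (apply (notc c Gc (Ex B)); auto).
    assert (Hin : In (rn s (Ex B)) D0) by (eapply rel_nonimp; eauto; discriminate).
    destruct (fresh (G :: rn s F0 :: D0) X) as [c' [Hf HX]].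
    apply dupP with (P := rn s (Ex B)); [na|auto|]. intros L H1 H2.
    apply G_exL with (B := rn s B) (c := c') (Gam := rn s (Ex B) :: L); [na|apply Permutation_refl| | | |].
    + intros [B0 [HB0 Ho]]. apply (Hf B0); auto. right; right.
      destruct HB0 as [<-|HB0]; auto.
    + apply Hf; simpl; auto.
    + apply Hf; simpl; auto.
    + assert (E : rn (upd s c c') F0 = rn s F0) by (apply upd_agree; auto).
      rewrite <- E. apply (IH F0 (upd s c c') X _ eq_refl).
      * intros A0 [<-|HA0].
        -- right; left. rewrite rn_inst, upd_agree, upd_c; auto.
        -- assert (HcA : ~ occurs c A0) by (apply (notc c Gc); auto; eapply pin_tl; eauto).
           destruct (Hrel A0 ltac:(eapply pin_tl; eauto)) as [[-> Hfix]|HA1].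
           ++ left; split; auto. rewrite upd_agree; auto. intros Ho; apply HcA; simpl; auto.
           ++ right; right. rewrite upd_agree; auto.
      * apply avoid_cons. eapply avoid_incl; eauto.
        intros c0 Hc0 Ho. apply occ_fsubst in Ho as [Ho|Ho].
        -- apply (Hav c0 _ Hc0 Hin). simpl; auto.
        -- simpl in Ho; subst; auto.
      * rewrite E. eapply Cont_mono; eauto. apply incl_tl; auto.
  -
    apply perm1 in Hp as [<- ->]. simpl in HC |- *.
    assert (HcB : ~ occurs c B) by (intros Ho; apply Hc2; exists (All B); simpl; auto).
    destruct (fresh (G :: rn s (All B) :: D0) X) as [c' [Hf HX]].
    assert (E : rn (upd s c c') (inst B (TConst c)) = inst (rn s B) (TConst c')).
    { rewrite rn_inst, upd_agree, upd_c; auto. }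
    assert (HcD : ~ occurs_list c' D0).
    { intros [B0 [HB0 Ho]]. apply (Hf B0); auto. right; right; auto. }
    apply G_allR with (c := c'); [na|auto| apply (Hf (rn s (All B))); simpl; auto| apply Hf; simpl; auto|].
    rewrite <- E. apply (IH (inst B (TConst c)) (upd s c c') (c' :: X) D0 eq_refl).
    + intros A0 HA0. assert (HcA : ~ occurs c A0) by (apply (notc c Gam); auto).
      destruct (Hrel A0 HA0) as [[-> Hfix]|HA1].
      * left; split; auto. rewrite upd_agree; auto. intros Ho; apply HcA; simpl; auto.
      * right. rewrite upd_agree; auto.
    + intros c0 B0 [<-|Hc0] HB0 Ho; [apply HcD; exists B0; auto| eapply Hav; eauto].
    + rewrite E. intros D3 Hi Ha H3. apply HC; auto.
      * intros c0 B0 Hc0; apply Ha; right; auto.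
      * simpl. apply G_allR with (c := c'); [na| |apply (Hf (rn s (All B))); simpl; auto| apply Hf; simpl; auto| exact H3].
        intros [B0 [HB0 Ho]]. apply (Ha c' B0); auto. left; auto.
Qed.

Theorem lemma4 (Gam : list formula) (G : formula) :
  Iproof no_allL_impR (Imp G Bot :: Gam) G ->
  IGder G no_allL_impR Gam G.
Proof.
  intros H. pose proof (trans G _ _ H G (fun x => x) [] Gam eq_refl) as T.
  rewrite rn_id in T. apply T.
  - intros A0 [<-|HA0]; [left; split; auto; apply rn_id | right; rewrite rn_id; auto].
  - intros c B [].
  - intros D3 _ _ h; exact h.
Qed.
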